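(* Let $\mathcal M$ be a stopping finite MDP with sink state $z$, and $\Phi=(F,r)$ a weighted reachability objective with outcome vector $\vec o=(o_1,\dots,o_k)$. Let $\mathcal Q=(\mathrm{obtainset}(o_1),\dots,\mathrm{obtainset}(o_k))$. Then $$\{\mathrm{prospect}(\mathcal M^\sigma,\Phi):\sigma\in\Sigma\}=\{(\vec o,\vec p):\vec p\in\mathcal P^{\mathcal Q}_{\mathcal M}\}.$$
   Context: MDP: $\mathcal M=(S,s_0,A,\delta)$ finite; $\Sigma$ the set of all history-dependent randomized strategies; $\mathbb P^\sigma_{\mathcal M}$ the induced measure on infinite paths from $s_0$. Weighted reachability objective $\Phi=(F,r)$: absorbing targets $F\subseteq S$, $r:F\to\mathbb Q$ with $r(s)\ne0$; $\Phi(\rho)=r$ of the first visited target, $0$ if none. Outcomes $\mathrm{outc}(\Phi)=r(F)\cup\{0\}$ listed increasingly $o_1<\dots<o_k$. $\mathrm{prospect}(\mathcal M^\sigma,\Phi)=(\vec o,\vec p)$ with $p_i=\mathbb P^\sigma_{\mathcal M}[\Phi(\rho)=o_i]$. $\mathcal M$ is stopping with sink $z$ if $z\notin F$ is an absorbing state and $\mathbb P^\sigma_{\mathcal M}[\lozenge(F\cup\{z\})]=1$ for all $\sigma$, where $\lozenge X$ is the set of paths visiting $X$. In a stopping MDP, $\mathrm{obtainset}(o_i)=\{s\in F:r(s)=o_i\}$ for $o_i\ne0$ and $\mathrm{obtainset}(0)=\{z\}$. For a tuple of target sets $\mathcal Q=(F_1,\dots,F_n)$, the achievable set is $\mathcal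 A^{\mathcal Q}_{\mathcal M}=\{(p_1,\dots,p_n):\exists\sigma\in\Sigma\,\forall i.\ p_i\le\mathbb P^\sigma_{\mathcal M}[\lozenge F_i]\}$ and the Pareto frontier is $\mathcal P^{\mathcal Q}_{\mathcal M}=\{\vec u\in\mathcal A^{\mathcal Q}_{\mathcal M}:\neg\exists \vec v\in\mathcal A^{\mathcal Q}_{\mathcal M}.\ \vec u\ne \vec v\wedge \vec u\le \vec v\}$ (componentwise order). *)

(* Defs.v *)
From HB Require Import structures.
From mathcomp Require Import all_boot all_order all_algebra.
From mathcomp Require Import boolp classical_sets reals.
Set Implicit Arguments. Unset Strict Implicit. Unset Printing Implicit Defensive.
Import Order.TTheory GRing.Theory Num.Theory.
Local Open Scope ring_scope.
Local Open Scope classical_set_scope.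

Section MDP.
Variables (R : realType) (S A : finType).
(* MDP M = (S, s0, A, delta): en s = actions enabled in s, delta s a = distribution
   over successors (only meaningful for enabled a). *)
Variable en : S -> {set A}.
Variable delta : S -> A -> {ffun S -> R}.

Definition is_mdp : Prop :=
  (forall s, en s != finset.set0) /\
  (forall s a, a \in en s ->
     (forall t, 0 <= delta s a t) /\ \sum_t delta s a t = 1).

Definition absorbing (s : S) : Prop := forall a, a \in en s -> delta s a s = 1.

(* history-dependent randomized strategies: a history is the sequence of past
   (state, action) pairs together with the current state *)
Record strategy := Strategy {
  strat :> seq (S * A) -> S -> {ffun A -> R};
  strat_ge0 : forall h s a, 0 <= strat h s a;
  strat_sum1 : forall h s, \sum_a strat h s a = 1;
  strat_supp : forall h s a, a \notin en s -> strat h s a = 0 }.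

Variable s0 : S.

(* probability weight of the finite path s_0 a_0 s_1 ... a_{n-1} s_n,
   given as rest = [(s_0,a_0);...;(s_{n-1},a_{n-1})] and last = s_n *)
Fixpoint pw (sigma : strategy) (pre rest : seq (S * A)) (last : S) : R :=
  match rest with
  | [::] => 1
  | (s, a) :: rest' =>
      let nxt := if rest' is (s', _) :: _ then s' else last in
      sigma pre s a * delta s a nxt * pw sigma (rcons pre (s, a)) rest' last
  end.

Definition path_states (h : seq (S * A)) (last : S) : seq S :=
  rcons (map fst h) last.

Definition path_weight (sigma : strategy) (h : seq (S * A)) (last : S) : R :=
  (if head last (path_states h last) == s0 then 1 else 0) * pw sigma [::] h last.

(* P^sigma of the cylinder event "the first n+1 states satisfy E" *)
Definition probn (sigma : strategy) (n : nat) (E : pred (seq S)) : R :=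
  \sum_(t : n.-tuple (S * A)) \sum_(s : S)
     (if E (path_states t s) then path_weight sigma t s else 0).

(* P^sigma[<> X] = lim_n P^sigma[X visited within n steps] *)
Definition Preach (sigma : strategy) (X : {set S}) : R :=
  sup (range (fun n => probn sigma n (fun ss => has (fun x => x \in X) ss))).

Section Objective.
Variables (F : {set S}) (r : S -> rat).

Definition Phi_fin (ss : seq S) : rat :=
  if has (fun x => x \in F) ss
  then r (nth s0 ss (find (fun x => x \in F) ss)) else 0.

Definition PPhi (sigma : strategy) (o : rat) : R :=
  if o != 0 then
    sup (range (fun n => probn sigma n (fun ss => Phi_fin ss == o)))
  else
    inf (range (fun n => probn sigma n (fun ss => ~~ has (fun x => x \in F) ss))).

Definition outc : seq rat := sort <=%R (undup (0 :: [seq r s | s in F])).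

Definition prospect (sigma : strategy) : seq rat * {ffun 'I_(size outc) -> R} :=
  (outc, [ffun i : 'I_(size outc) => PPhi sigma (nth 0 outc i)]).

Definition obtainset (z : S) (o : rat) : {set S} :=
  if o != 0 then finset.finset (fun s => (s \in F) && (r s == o)) else finset.set1 z.

Definition stopping (z : S) : Prop :=
  z \notin F /\ absorbing z /\ forall sigma : strategy, Preach sigma (F :|: finset.set1 z) = 1.

End Objective.

Definition achievable (n : nat) (Q : 'I_n -> {set S}) : set {ffun 'I_n -> R} :=
  [set p | exists sigma : strategy, forall i, p i <= Preach sigma (Q i)].

Definition pareto (n : nat) (Q : 'I_n -> {set S}) : set {ffun 'I_n -> R} :=
  [set u | achievable Q u /\
           ~ (exists v, achievable Q v /\ u <> v /\ forall i, u i <= v i)].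

End MDP.

(* Main.v *)
Require Import Defs.
From HB Require Import structures.
From mathcomp Require Import all_boot all_order all_algebra.
From mathcomp Require Import boolp classical_sets reals.
Import Order.TTheory GRing.Theory Num.Theory.
Set Implicit Arguments. Unset Strict Implicit. Unset Printing Implicit Defensive.
Local Open Scope ring_scope.
From mathcomp Require Import lra.

Section SupInf.
Variable R : realType.
Implicit Types f : nat -> R.
Local Open Scope classical_set_scope.

Lemma sup_ub f n : (forall m, f m <= 1) -> f n <= sup (range f).
Proof.
move=> H; apply: ub_le_sup; last by exists n.
by exists 1 => _ [m _ <-].
Qed.

Lemma sup_le f c : (forall m, f m <= c) -> sup (range f) <= c.
Proof. by move=> H; apply: ge_sup; [exists (f 0%N), 0%N | move=> _ [m _ <-]]. Qed.

Lemma sup_adh f e : (forall m, f m <= 1) -> 0 < e -> exists n, sup (range f) - e < f n.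
Proof.
move=> H he.
have hs : has_sup (range f) by split; [exists (f 0%N), 0%N | exists 1 => _ [m _ <-]].
have [x [n _ <-] Hx] := sup_adherent he hs.
by exists n.
Qed.

Lemma inf_lb f n : (forall m, 0 <= f m) -> inf (range f) <= f n.
Proof.
move=> H; apply: ge_inf; last by exists n.
by exists 0 => _ [m _ <-].
Qed.

Lemma inf_ge f c : (forall m, c <= f m) -> c <= inf (range f).
Proof. by move=> H; apply: lb_le_inf; [exists (f 0%N), 0%N | move=> _ [m _ <-]]. Qed.
End SupInf.

Section Basics.
Variables (R : realType) (S A : finType) (en : S -> {set A})
  (delta : S -> A -> {ffun S -> R}) (s0 : S).
Hypothesis Hd : forall s a, a \in en s ->
     (forall t, 0 <= delta s a t) /\ \sum_t delta s a t = 1.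

Lemma sd_ge0 (sigma : strategy R en) h s a t : 0 <= sigma h s a * delta s a t.
Proof.
case: (boolP (a \in en s)) => ha.
  by apply: mulr_ge0; [exact: strat_ge0 | exact: (Hd ha).1].
by rewrite strat_supp // mul0r.
Qed.

Lemma pw_ge0 (sigma : strategy R en) rest pre last : 0 <= pw delta sigma pre rest last.
Proof.
elim: rest pre => [|[s a] rest IH] pre //=.
by apply: mulr_ge0 => //; exact: sd_ge0.
Qed.

Lemma pw_rcons (sigma : strategy R en) rest pre s a last :
  pw delta sigma pre (rcons rest (s, a)) last =
  pw delta sigma pre rest s * (sigma (pre ++ rest) s a * delta s a last).
Proof.
elim: rest pre => [|[s1 a1] rest IH] pre /=.
  by rewrite cats0 mulr1 mul1r.
rewrite IH -cat_rcons !mulrA; congr (_ * _ * _ * _ * _).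
by case: rest {IH}.
Qed.

Lemma sum_sd (sigma : strategy R en) h s :
  \sum_a \sum_t sigma h s a * delta s a t = 1.
Proof.
rewrite -(strat_sum1 sigma h s); apply: eq_bigr => a _.
rewrite -mulr_sumr; case: (boolP (a \in en s)) => ha.
  by rewrite (Hd ha).2 mulr1.
by rewrite strat_supp // mul0r.
Qed.

Lemma sum_tupleS (T : finType) n (G : n.+1.-tuple T -> R) :
  \sum_t G t = \sum_(t : n.-tuple T) \sum_(x : T) G [tuple of rcons t x].
Proof.
rewrite pair_big /=.
rewrite (reindex (fun p : n.-tuple T * T => [tuple of rcons p.1 p.2])) //.
exists (fun t : n.+1.-tuple T =>
  ([tuple of belast (thead t) (behead t)], last (thead t) (behead t))).
  move=> [t x] _ /=; congr (_, _); last first.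
    case: t => [[|y t] Ht] //=. by rewrite last_rcons.
  apply: val_inj => /=; case: t => [[|y t] Ht] //=.
  by rewrite belast_rcons.
move=> t _; apply: val_inj => /=.
by case: t => [[|y t] Ht] //=; rewrite -lastI.
Qed.

Definition probf (sigma : strategy R en) n (f : seq S -> R) : R :=
  \sum_(t : n.-tuple (S * A)) \sum_(s : S)
     f (path_states t s) * path_weight delta s0 sigma t s.

Lemma probnE (sigma : strategy R en) n E : probn delta s0 sigma n E = probf sigma n (fun ss => (E ss)%:R).
Proof.
apply: eq_bigr => t _; apply: eq_bigr => s _.
by case: (E _); rewrite ?mul1r ?mul0r.
Qed.

Lemma pweight_ge0 (sigma : strategy R en) (t : seq (S * A)) s : 0 <= path_weight delta s0 sigma t s.
Proof. by apply: mulr_ge0; [case: eqP | exact: pw_ge0]. Qed.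

Lemma path_states_rcons (t : seq (S * A)) s a s' :
  path_states (rcons t (s, a)) s' = rcons (path_states t s) s'.
Proof. by rewrite /path_states map_rcons. Qed.

Lemma size_path_states (t : seq (S * A)) s : size (path_states t s) = (size t).+1.
Proof. by rewrite size_rcons size_map. Qed.

Lemma pweight_rcons (sigma : strategy R en) (t : seq (S * A)) s a s' :
  path_weight delta s0 sigma (rcons t (s, a)) s' =
  path_weight delta s0 sigma t s * (sigma t s a * delta s a s').
Proof.
rewrite /path_weight pw_rcons path_states_rcons mulrA; congr (_ * _ * _).
by rewrite /path_states; case: t.
Qed.

Lemma probf_marg (sigma : strategy R en) n f :
  probf sigma n.+1 (fun ss => f (take n.+1 ss)) = probf sigma n f.
Proof.
rewrite /probf sum_tupleS; apply: eq_bigr => t _.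
have H1 : forall G : S * A -> R, \sum_x G x = \sum_s \sum_a G (s, a).
  by move=> G; rewrite pair_big /=; apply: eq_bigr => -[].
rewrite H1; apply: eq_bigr => s _.
rewrite -[RHS]mulr1 -(sum_sd sigma t s) mulr_sumr.
apply: eq_bigr => a _; rewrite mulr_sumr; apply: eq_bigr => s' _.
rewrite pweight_rcons path_states_rcons.
have -> : take n.+1 (rcons (path_states t s) s') = path_states t s.
  by rewrite -cats1 take_size_cat // size_path_states size_tuple.
by rewrite mulrA.
Qed.


Lemma probf_le (sigma : strategy R en) n f g :
  (forall (t : n.-tuple (S * A)) s, f (path_states t s) * path_weight delta s0 sigma t s <=
                   g (path_states t s) * path_weight delta s0 sigma t s) ->
  probf sigma n f <= probf sigma n g.
Proof. by move=> H; apply: ler_sum => t _; apply: ler_sum => s _; exact: H. Qed.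

Lemma probf_lep (sigma : strategy R en) n f g :
  (forall ss, f ss <= g ss) -> probf sigma n f <= probf sigma n g.
Proof.
move=> H; apply: probf_le => t s; apply: ler_wpM2r; [exact: pweight_ge0 | exact: H].
Qed.

Lemma probfD (sigma : strategy R en) n f g :
  probf sigma n (fun ss => f ss + g ss) = probf sigma n f + probf sigma n g.
Proof.
rewrite /probf -big_split; apply: eq_bigr => t _; rewrite -big_split.
by apply: eq_bigr => s _; rewrite mulrDl.
Qed.

Lemma probfN (sigma : strategy R en) n f :
  probf sigma n (fun ss => - f ss) = - probf sigma n f.
Proof.
rewrite /probf -sumrN; apply: eq_bigr => t _; rewrite -sumrN.
by apply: eq_bigr => s _; rewrite mulNr.
Qed.

Lemma probf_sum (sigma : strategy R en) n (I : finType) (f : I -> seq S -> R) :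
  probf sigma n (fun ss => \sum_i f i ss) = \sum_i probf sigma n (f i).
Proof.
rewrite /probf [RHS]exchange_big; apply: eq_bigr => t _; rewrite [RHS]exchange_big.
by apply: eq_bigr => s _; rewrite mulr_suml.
Qed.

Lemma probf1 (sigma : strategy R en) n : probf sigma n (fun _ => 1) = 1.
Proof.
elim: n => [|n IH].
  rewrite /probf (big_pred1 [tuple]) => [|t]; last by rewrite /= [t]tuple0; apply/eqP.
  rewrite (bigD1 s0) //= big1 => [|s /negbTE Hs].
    by rewrite mul1r addr0 /path_weight /path_states /= eqxx mul1r.
  by rewrite mul1r /path_weight /path_states /= Hs mul0r.
by rewrite -(probf_marg sigma n (fun _ => 1)) in IH.
Qed.

Lemma probn_ge0 (sigma : strategy R en) n E : 0 <= probn delta s0 sigma n E.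
Proof.
rewrite probnE; apply: sumr_ge0 => t _; apply: sumr_ge0 => s _.
by apply: mulr_ge0; [case: (E _) | exact: pweight_ge0].
Qed.

Lemma probn_le1 (sigma : strategy R en) n E : probn delta s0 sigma n E <= 1.
Proof.
rewrite probnE; have := @probf_lep sigma n (fun ss => (E ss)%:R) (fun _ => 1).
by rewrite probf1; apply => ss; case: (E ss).
Qed.

Lemma probn_mon (sigma : strategy R en) n (X : pred S) :
  probn delta s0 sigma n (fun ss => has X ss) <= probn delta s0 sigma n.+1 (fun ss => has X ss).
Proof.
rewrite !probnE -probf_marg; apply: probf_lep => ss.
case H: (has X (take _ ss)) => //=.
by rewrite -(cat_take_drop n.+1 ss) has_cat H.
Qed.

Lemma probn_monN (sigma : strategy R en) m n (X : pred S) : (m <= n)%N ->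
  probn delta s0 sigma m (fun ss => has X ss) <= probn delta s0 sigma n (fun ss => has X ss).
Proof.
move=> /subnKC <-; elim: (n - m)%N => [|k IH]; first by rewrite addn0.
by apply: le_trans IH _; rewrite addnS; exact: probn_mon.
Qed.

Lemma delta_abs x a y : a \in en x -> delta x a x = 1 -> y != x -> delta x a y = 0.
Proof.
move=> ha hx hy; have [H0 H1] := Hd ha.
have HS : \sum_(t | t != x) delta x a t = 0.
  by apply: (addrI 1); rewrite addr0 -[RHS]H1 [in RHS](bigD1 x) //= hx.
by move/psumr_eq0P: HS => H; apply: H => // t _; exact: H0.
Qed.

Section Abs.
Variable X : pred S.
Hypothesis HX : forall x, X x -> forall a, a \in en x -> delta x a x = 1.

Definition arel (x y : S) := X x ==> (y == x).

Lemma pw_path (sigma : strategy R en) rest pre last :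
  pw delta sigma pre rest last != 0 ->
  path arel (head last (path_states rest last)) (behead (path_states rest last)).
Proof.
elim: rest pre => [|[s a] rest IH] pre //=.
set nxt := (X in delta s a X).
have Hn : nxt = head last (path_states rest last) by rewrite /nxt; case: rest {IH nxt}.
rewrite !mulf_eq0 !negb_or => /andP[/andP[Hsig Hdel] Hpw].
change (path arel s (path_states rest last)).
case E: (path_states rest last) => [|y l]; first by move: (size_path_states rest last); rewrite E.
rewrite /=; apply/andP; split; last by have := IH _ Hpw; rewrite E.
have ha : a \in en s by apply: contraNT Hsig => H; rewrite strat_supp.
rewrite /arel; apply/implyP => Hx; case: eqP => // /eqP Hne.
have Hy : y = nxt by rewrite Hn E.
by move: Hdel; rewrite -Hy (delta_abs ha (HX Hx ha) Hne) eqxx.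
Qed.

Lemma path_abs x l : path arel x l -> X x -> all (pred1 x) l.
Proof.
elim: l x => [|y l IH] x //= /andP[Hxy Hp] Hx.
move: Hxy; rewrite /arel Hx /= => /eqP Hyx; subst y.
by rewrite eqxx /=; apply: IH.
Qed.

Lemma path_first x l y : path arel x l -> y \in x :: l -> X y ->
  y = nth x (x :: l) (find X (x :: l)).
Proof.
elim: l x => [|y' l IH] x Hp Hy HXy.
  by move: Hy; rewrite inE => /eqP ->; rewrite /=; case: (X x).
case Hx: (X x).
  rewrite /= Hx /=; have := path_abs Hp Hx.
  move: Hy; rewrite inE => /orP[/eqP -> //|Hy] /allP H; exact/eqP/H.
move: Hy; rewrite inE => /orP[/eqP Hyx|Hy]; first by move: HXy; rewrite Hyx Hx.
rewrite /= Hx /=; move: Hp => /= /andP[_ Hp].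
have Hh : has X (y' :: l) by apply/hasP; exists y.
rewrite -/(find X (y' :: l)) (set_nth_default y') -?has_find //; exact: IH.
Qed.
End Abs.
Section Main.
Variables (F : {set S}) (r : S -> rat) (z : S).
Hypothesis HF : forall s, s \in F -> forall a, a \in en s -> delta s a s = 1.
Hypothesis Hr : forall s, s \in F -> r s != 0.
Hypothesis HzF : z \notin F.
Hypothesis Hz : forall a, a \in en z -> delta z a z = 1.
Hypothesis Hstop : forall sigma : strategy R en,
  Preach delta s0 sigma (F :|: finset.set1 z) = 1.

Local Notation o := (outc F r).
Definition Q (i : 'I_(size o)) := obtainset F r z (nth 0 o i).
Definition val x := if x \in F then r x else 0.

Lemma o_uniq : uniq o.
Proof. by rewrite /outc sort_uniq undup_uniq. Qed.

Lemma o_mem c : (c \in o) = (c \in 0 :: [seq r s | s in F]).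
Proof. by rewrite /outc mem_sort mem_undup. Qed.

Lemma mem_o0 : 0 \in o.
Proof. by rewrite o_mem inE eqxx. Qed.

Lemma mem_oF x : x \in F -> r x \in o.
Proof. by move=> Hx; rewrite o_mem inE; apply/orP; right; apply: map_f; rewrite mem_enum. Qed.

Lemma memQ i x : (x \in Q i) = (x \in F :|: finset.set1 z) && (nth 0 o i == val x).
Proof.
rewrite /Q /obtainset /val finset.in_setU finset.in_set1.
case: ifP => H0.
  rewrite finset.in_set; case xF: (x \in F) => /=; first by rewrite eq_sym.
  by rewrite (negbTE H0) andbF.
move/negbFE: H0 => /eqP ->; rewrite finset.in_set1.
case xF: (x \in F) => /=; last by rewrite andbT.
rewrite [0 == _]eq_sym (negbTE (Hr xF)).
by apply/negP => /eqP Hxz; move: HzF; rewrite -Hxz xF.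
Qed.

Lemma sum_nth_eq c : \sum_(i < size o) ((nth 0 o i == c)%:R : R) = (c \in o)%:R.
Proof.
case: (boolP (c \in o)) => Hc.
  have Hi : (index c o < size o)%N by rewrite index_mem.
  rewrite (bigD1 (Ordinal Hi)) //= nth_index // eqxx big1 ?addr0 // => j Hj.
  case: eqP => // Hjc; case/eqP: Hj; apply: val_inj => /=.
  by rewrite -Hjc index_uniq // o_uniq.
rewrite big1 // => i _; case: eqP => // Hic.
by move: Hc; rewrite -Hic mem_nth.
Qed.

Lemma Phi_mem ss : Phi_fin s0 F r ss \in o.
Proof.
rewrite /Phi_fin; case: ifP => H; last exact: mem_o0.
by apply: mem_oF; exact: nth_find.
Qed.

Lemma Phi0 ss : (Phi_fin s0 F r ss == 0) = ~~ has (fun x => x \in F) ss.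
Proof.
rewrite /Phi_fin; case: ifP => H /=; last by rewrite eqxx.
by apply/negbTE/Hr; exact: nth_find.
Qed.

Lemma ind_le (b1 b2 : bool) : (b1 -> b2) -> (b1%:R : R) <= b2%:R.
Proof. by case: b1; case: b2 => // /(_ isT). Qed.


Lemma hasU (ss : seq S) : has (fun x => x \in F :|: finset.set1 z) ss =
  has (fun x => x \in F) ss || has (fun x => x \in finset.set1 z) ss.
Proof. by rewrite -has_predU; apply: eq_has => x; rewrite finset.in_setU. Qed.

Lemma probf_le1D (sigma : strategy R en) n f g :
  (forall ss, f ss <= 1 + g ss) -> probf sigma n f <= 1 + probf sigma n g.
Proof. by move=> H; rewrite -[1](probf1 sigma n) -probfD; apply: probf_lep. Qed.

Lemma PhiA (sigma : strategy R en) (i : 'I_(size o)) :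
  PPhi delta s0 F r sigma (nth 0 o i) <= Preach delta s0 sigma (Q i).
Proof.
rewrite /PPhi /Preach; case: ifP => H0.
  apply: sup_le => m; apply: le_trans (sup_ub _ _); last by move=> n; exact: probn_le1.
  rewrite !probnE; apply: probf_lep => ss; apply: ind_le => /eqP HP.
  move: HP; rewrite /Phi_fin; case: ifP => Hh HP; last by move: H0; rewrite -HP eqxx.
  apply/seq.hasP; exists (nth s0 ss (find (fun x => x \in F) ss)); first by rewrite mem_nth // -has_find.
  by have HF' := nth_find s0 Hh; rewrite /Q /obtainset H0 finset.in_set HF' HP eqxx.
apply/ler_addgt0Pr => e he.
pose d n := probn delta s0 sigma n (fun ss => has (fun x => x \in F :|: finset.set1 z) ss).
have [n Hn] := sup_adh (f := d) (fun m => probn_le1 _ _ _) he.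
have Hs := Hstop sigma; rewrite /Preach -/d in Hs; rewrite Hs in Hn.
pose b n := probn delta s0 sigma n (fun ss => ~~ has (fun x => x \in F) ss).
pose c n := probn delta s0 sigma n (fun ss => has (fun x => x \in Q i) ss).
have H1 : inf (range b) <= b n := inf_lb n (fun m => probn_ge0 _ _ _).
have H2 : c n <= sup (range c) := sup_ub n (fun m => probn_le1 _ _ _).
have H3 : b n + d n <= 1 + c n.
  rewrite /b /c /d !probnE -probfD; apply: probf_le1D => ss.
  rewrite hasU /Q /obtainset H0.
  by case: (has _ ss); case: (has _ ss) => /=; lra.
rewrite /b /c /d in H1 H2 H3 Hn *; lra.
Qed.


Lemma probn_ext (sigma : strategy R en) n (E1 E2 : pred (seq S)) :
  E1 =1 E2 -> probn delta s0 sigma n E1 = probn delta s0 sigma n E2.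
Proof. by move=> H; apply: eq_bigr => t _; apply: eq_bigr => s _; rewrite H. Qed.

Lemma probf_ext (sigma : strategy R en) n f g :
  f =1 g -> probf sigma n f = probf sigma n g.
Proof. by move=> H; apply: eq_bigr => t _; apply: eq_bigr => s _; rewrite H. Qed.

Lemma PhiB (sigma : strategy R en) :
  1 <= \sum_(i < size o) PPhi delta s0 F r sigma (nth 0 o i).
Proof.
have Hi0 : (index (0:rat) o < size o)%N by rewrite index_mem mem_o0.
pose i0 := Ordinal Hi0.
have Ho0 : nth 0 o i0 = 0 by rewrite /= nth_index // mem_o0.
have Hne : forall i : 'I_(size o), i != i0 -> nth 0 o i != 0.
  move=> i; apply: contraNneq => Hi; apply/eqP/val_inj => /=.
  by rewrite -Hi index_uniq // o_uniq.
pose a (i : 'I_(size o)) n := probn delta s0 sigma n (fun ss => Phi_fin s0 F r ss == nth 0 o i).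
have sumA : forall n, \sum_i a i n = 1.
  move=> n; rewrite /a; under eq_bigr do rewrite probnE.
  rewrite -(probf_sum sigma n (fun (i : 'I_(size o)) ss => ((Phi_fin s0 F r ss == nth 0 o i)%:R))).
  rewrite -[RHS](probf1 sigma n); apply: probf_ext => ss.
  rewrite (eq_bigr (fun i : 'I_(size o) => ((nth 0 o i == Phi_fin s0 F r ss)%:R : R))) => [|i _]; last by rewrite eq_sym.
  by rewrite sum_nth_eq Phi_mem.
have E0 : PPhi delta s0 F r sigma (nth 0 o i0) = inf (range (a i0)).
  rewrite /PPhi Ho0 eqxx /=.
  suff -> : a i0 = (fun n => probn delta s0 sigma n (fun ss => ~~ has (fun x => x \in F) ss)) by [].
  apply: funext => n.
  by rewrite /a Ho0; apply: probn_ext => ss; rewrite Phi0.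
have E1 : forall i, i != i0 -> PPhi delta s0 F r sigma (nth 0 o i) = sup (range (a i)).
  by move=> i Hi; rewrite /PPhi (Hne i Hi).
rewrite (bigD1 i0) //= E0 (eq_bigr _ E1).
have : forall m, 1 - \sum_(i | i != i0) sup (range (a i)) <= a i0 m.
  move=> m; have := sumA m; rewrite (bigD1 i0) //= => Hs.
  have : \sum_(i | i != i0) a i m <= \sum_(i | i != i0) sup (range (a i)).
    by apply: ler_sum => i _; apply: sup_ub => k; exact: probn_le1.
  lra.
move/inf_ge; lra.
Qed.

Lemma probf_le1 (sigma : strategy R en) n f :
  (forall (t : n.-tuple (S * A)) s, f (path_states t s) * path_weight delta s0 sigma t s
     <= path_weight delta s0 sigma t s) -> probf sigma n f <= 1.
Proof.
move=> H; rewrite -(probf1 sigma n); apply: probf_le => t s; rewrite mul1r; exact: H.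
Qed.

Lemma HFZ x : x \in F :|: finset.set1 z -> forall a, a \in en x -> delta x a x = 1.
Proof. by rewrite finset.in_setU finset.in_set1 => /orP[/HF // | /eqP ->]. Qed.

Lemma PhiC (tau : strategy R en) :
  \sum_(i < size o) Preach delta s0 tau (Q i) <= 1.
Proof.
apply/ler_addgt0Pr => e he.
have Hk : (0 < size o)%N.
  by rewrite lt0n size_eq0; apply/eqP => Ho; move: mem_o0; rewrite Ho.
pose eps := e / (size o)%:R.
have Heps : 0 < eps by rewrite /eps divr_gt0 // ltr0n.
pose c i n := probn delta s0 tau n (fun ss => has (fun x => x \in Q i) ss).
have : forall i, exists n, Preach delta s0 tau (Q i) - eps < c i n.
  by move=> i; apply: sup_adh => // m; exact: probn_le1.
case/choice => N HN.
pose M := (\max_i N i)%N.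
have HM : forall i, c i (N i) <= c i M.
  by move=> i; apply: probn_monN; exact: leq_bigmax.
have Hsum : \sum_i c i M <= 1.
  rewrite /c; under eq_bigr do rewrite probnE.
  rewrite -(probf_sum tau M (fun (i : 'I_(size o)) ss => ((has (fun x => x \in Q i) ss)%:R))).
  apply: probf_le1 => t s.
  have [->|Hw] := eqVneq (path_weight delta s0 tau t s) 0; first by rewrite mulr0.
  rewrite -[X in _ <= X]mul1r; apply: ler_wpM2r; first exact: pweight_ge0.
  have Hpw : pw delta tau [::] t s != 0 by move: Hw; rewrite /path_weight mulf_eq0 negb_or => /andP[].
  have := pw_path HFZ Hpw.
  case Eps: (path_states t s) => [|x0 l]; first by move: (size_path_states t s); rewrite Eps.
  move=> /= Hp.
  pose xs := nth x0 (x0 :: l) (find (fun x => x \in F :|: finset.set1 z) (x0 :: l)).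
  apply: le_trans (_ : \sum_(i < size o) ((nth 0 o i == val xs)%:R : R) <= 1).
    apply: ler_sum => i _; apply: ind_le => Hh.
    have Hh2 : has (fun x => x \in Q i) (x0 :: l) by [].
    case/seq.hasP: Hh2 => y Hy HyQ.
    move: HyQ; rewrite memQ => /andP[HyFZ /eqP ->].
    by rewrite (path_first Hp Hy HyFZ).
  by rewrite sum_nth_eq; case: (_ \in _).
have : \sum_i Preach delta s0 tau (Q i) <= \sum_i (c i M + eps).
  by apply: ler_sum => i _; have := HN i; have := HM i; lra.
rewrite big_split /= sumr_const card_ord.
have -> : eps *+ size o = e by rewrite /eps -mulr_natr divfK // pnatr_eq0 -lt0n.
lra.
Qed.


Local Open Scope classical_set_scope.

Definition wv (sigma : strategy R en) : {ffun 'I_(size o) -> R} :=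
  [ffun i : 'I_(size o) => PPhi delta s0 F r sigma (nth 0 o i)].

Lemma w_pareto (sigma : strategy R en) : pareto en delta s0 Q (wv sigma).
Proof.
split; first by exists sigma => i; rewrite ffunE; exact: PhiA.
move=> [v [[tau Htau] [Hne Hle]]]; apply: Hne; apply/ffunP => i.
have Hs : \sum_i v i <= 1.
  by apply: le_trans (PhiC tau); apply: ler_sum => j _; exact: Htau.
have Hw : 1 <= \sum_i wv sigma i.
  by rewrite (eq_bigr _ (fun i _ => ffunE _ i)); exact: PhiB.
have H0 : \sum_i (v i - wv sigma i) == 0.
  rewrite eq_le sumr_ge0 ?andbT => [|j _]; last by rewrite subr_ge0.
  by rewrite sumrB; lra.
move/eqP/psumr_eq0P: H0 => H.
have Hge : forall j : 'I_(size o), true -> 0 <= v j - wv sigma j.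
  by move=> j _; rewrite subr_ge0 Hle.
have Hi := H Hge i isT.
by apply/eqP; rewrite eq_sym -subr_eq0 Hi.
Qed.

Lemma main_eq :
  [set prospect delta s0 F r sigma | sigma in [set: strategy R en]] =
  [set (o, p) | p in pareto en delta s0 Q].
Proof.
apply/seteqP; split => x.
  by case=> sigma _ <-; exists (wv sigma) => //; exact: w_pareto.
case=> p [[sigma Hach] Hmax] <-; exists sigma => //.
pose P := [ffun i : 'I_(size o) => Preach delta s0 sigma (Q i)].
have HP : forall q, pareto en delta s0 Q q -> (forall i, q i <= P i) -> q = P.
  move=> q [_ Hq] Hle; have [//|Hne] := eqVneq q P; exfalso; apply: Hq.
  exists P; split; first by exists sigma => i; rewrite ffunE.
  by split; [exact/eqP | exact: Hle].
have HpP : p = P.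
  apply: HP => [|i]; first by split => //; exists sigma.
  by rewrite ffunE.
have HwP : wv sigma = P.
  by apply: HP => [|i]; [exact: w_pareto | rewrite !ffunE; exact: PhiA].
by rewrite /prospect HpP -HwP.
Qed.

End Main.

End Basics.


Unset Implicit Arguments.
Local Open Scope classical_set_scope.

Theorem mainTheorem4 (R : realType) (S A : finType) (s0 : S)
  (en : S -> {set A}) (delta : S -> A -> {ffun S -> R})
  (F : {set S}) (r : S -> rat) (z : S) :
  is_mdp en delta ->
  (forall s, s \in F -> absorbing en delta s) ->
  (forall s, s \in F -> r s != 0) ->
  stopping en delta s0 F z ->
  [set prospect delta s0 F r sigma | sigma in [set: @strategy R S A en]] =
  [set (outc F r, p) | p in
     pareto en delta s0 (fun i : 'I_(size (outc F r)) => obtainset F r z (nth 0 (outc F r) i))].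
Proof.
move=> [_ Hd] HF Hr [HzF [Hz Hstop]].
exact: (main_eq Hd HF Hr HzF Hz Hstop).
Qed.
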